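(* Let $p\ge1$, let $w(0),\ldots,w(p)$ be positive weights, and let $P_1,\ldots,P_m$ be $p\times p$ orthogonal projectors with ranks $k_1,\ldots,k_m$. For orthogonal projectors $Q_1,Q_2$ with ranks $r_1,r_2$ set $D_w^2(Q_1,Q_2)=\tfrac12\|w(r_1)Q_1-w(r_2)Q_2\|^2$ (Frobenius norm), let $\sigma_w^2(P)=\frac1m\sum_{i=1}^m D_w^2(P_i,P)$, and call an average orthogonal projector (AOP) $P_w$ any $p\times p$ orthogonal projector (of any rank $0,\ldots,p$) minimizing $\sigma_w^2$. Let $\bar P_w=\frac1m\sum_{i=1}^m w(k_i)P_i=\sum_{i=1}^p\lambda_iu_iu_i'$ be an eigendecomposition with $\lambda_1\ge\cdots\ge\lambda_p\ge0$ and orthonormal eigenvectors $u_1,\ldots,u_p$. Then the rank $k$ of the AOP $P_w$ maximizes \[ f_w(k)=w(k)\Big(\sum_{i=1}^k\lambda_i\Big)I(k>0)-\tfrac12 w^2(k)k,\qquad k=0,\ldots,p, \] and \[ P_w=I(k>0)\cdot\sum_{i=1}^k u_iu_i', \] where $u_1,\ldots,u_k$ are the eigenvectors corresponding to the eigenvalues $\lambda_1,\ldots,\lambda_k$.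
   Context: An orthogonal projector is a $p\times p$ real matrix $P$ with $P=P'=P^2$; the zero matrix is allowed and has rank $0$. $I(\cdot)$ denotes the indicator function. *)

(* Defs.v *)
From HB Require Import structures.
From mathcomp Require Import all_boot all_order all_algebra.
From mathcomp Require Import reals.
Set Implicit Arguments. Unset Strict Implicit. Unset Printing Implicit Defensive.
Import Order.TTheory GRing.Theory Num.Theory.
Local Open Scope ring_scope.

Section Defs.
Variables (R : realType) (p : nat).

Definition is_oproj (P : 'M[R]_p) : Prop := P^T = P /\ P *m P = P.

Definition frob2 (A : 'M[R]_p) : R := \sum_(i < p) \sum_(j < p) A i j ^+ 2.

Definition Dw2 (w : nat -> R) (Q1 Q2 : 'M[R]_p) : R :=
  2^-1 * frob2 (w (\rank Q1) *: Q1 - w (\rank Q2) *: Q2).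

Definition sigma2 (w : nat -> R) (m : nat) (Ps : 'I_m -> 'M[R]_p) (P : 'M[R]_p) : R :=
  (m%:R)^-1 * \sum_(i < m) Dw2 w (Ps i) P.

Definition is_AOP (w : nat -> R) (m : nat) (Ps : 'I_m -> 'M[R]_p) (P : 'M[R]_p) : Prop :=
  is_oproj P /\ forall Q : 'M[R]_p, is_oproj Q -> sigma2 w Ps P <= sigma2 w Ps Q.

Definition Pbar (w : nat -> R) (m : nat) (Ps : 'I_m -> 'M[R]_p) : 'M[R]_p :=
  (m%:R)^-1 *: \sum_(i < m) w (\rank (Ps i)) *: Ps i.

Definition outer (u : 'M[R]_p) (i : 'I_p) : 'M[R]_p := col i u *m (col i u)^T.

Definition fw (w : nat -> R) (lam : 'I_p -> R) (k : nat) : R :=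
  w k * (\sum_(i < p | (i < k)%N) lam i) * (0 < k)%N%:R - 2^-1 * w k ^+ 2 * k%:R.

End Defs.

(* Main.v *)
Require Import Defs.
From HB Require Import structures.
From mathcomp Require Import all_boot all_order all_algebra.
From mathcomp Require Import reals.
From mathcomp Require Import ring lra zify.
Import Order.TTheory GRing.Theory Num.Theory.
Local Open Scope ring_scope.

Set Implicit Arguments. Unset Strict Implicit. Unset Printing Implicit Defensive.

Section Helpers.
Variable R : realType.

Lemma decomp n (Pi : 'M[R]_n) : Pi^T = Pi -> Pi *m Pi = Pi ->
  exists k (X : 'M[R]_(n, k)), X^T *m X = 1%:M /\ X *m X^T = Pi.
Proof.
move: {2}(\rank Pi) (leqnn (\rank Pi)) => N; elim: N Pi => [|N IH] Pi.
  rewrite leqn0 mxrank_eq0 => /eqP -> _ _.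
  exists 0%N, 0; split; first by apply/matrixP => -[].
  by rewrite mul0mx.
move=> hr hs hi.
have [/eqP P0|/matrix0Pn [i [j hij]]] := boolP (Pi == 0).
  exists 0%N, 0; split; first by apply/matrixP => -[].
  by rewrite mul0mx P0.
pose x := col j Pi.
have Px : Pi *m x = x by rewrite /x !colE mulmxA hi.
pose s := (x^T *m x) 0 0.
have s_gt0 : 0 < s.
  rewrite /s mxE (bigD1 i) //=; apply: ltr_pwDl; last first.
    by apply: sumr_ge0 => l _; rewrite !mxE -expr2 sqr_ge0.
  by rewrite !mxE -expr2 lt_def sqr_ge0 sqrf_eq0 andbT hij.
pose e := (Num.sqrt s)^-1 *: x.
have ee : e^T *m e = 1%:M.
  have tZ : ((Num.sqrt s)^-1 *: x)^T = (Num.sqrt s)^-1 *: x^T.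
    by apply/matrixP=> ? ?; rewrite !mxE.
  apply/matrixP => a b; rewrite !ord1 /e tZ -scalemxAr -scalemxAl.
  rewrite mxE [in RHS]mxE mulr1n mxE -/s mulrA -invfM -expr2 sqr_sqrtr ?ltW //.
  by rewrite mulVf // gt_eqF.
have Pe : Pi *m e = e by rewrite /e -scalemxAr Px.
have eP : e^T *m Pi = e^T by rewrite -{1}hs -trmx_mul Pe.
pose Pi' := Pi - e *m e^T.
have s' : Pi'^T = Pi' by rewrite /Pi' linearB /= trmx_mul trmxK hs.
have i' : Pi' *m Pi' = Pi'.
  rewrite /Pi' mulmxBl !mulmxBr hi mulmxA Pe -mulmxA eP -mulmxA (mulmxA e^T) ee.
  by rewrite mul1mx subrr subr0.
have Pe0 : Pi' *m e = 0 by rewrite /Pi' mulmxBl Pe -mulmxA ee mulmx1 subrr.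
have sub : (Pi' <= Pi)%MS.
  have -> : Pi' = (1%:M - e *m e^T) *m Pi.
    by rewrite mulmxBl mul1mx -mulmxA eP.
  exact: submxMl.
have lt : (\rank Pi' < \rank Pi)%N.
  rewrite (ltn_leqif (mxrank_leqif_sup sub)); apply/negP => /submxP [K hK].
  have : e = 0 by rewrite -Pe hK -mulmxA Pe0 mulmx0.
  move=> e0; move: ee; rewrite e0 mulmx0 => /matrixP /(_ 0 0).
  by rewrite !mxE /= mulr1n => /eqP; rewrite eq_sym oner_eq0.
have [k [X [X1 X2]]] := IH Pi' (leq_trans (leq_trans lt hr) (leqnn _)) s' i'.
have Xe : X^T *m e = 0.
  have -> : X^T = X^T *m Pi' by rewrite -X2 mulmxA X1 mul1mx.
  by rewrite -mulmxA Pe0 mulmx0.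
have eX : e^T *m X = 0 by rewrite -(trmxK X) -trmx_mul Xe trmx0.
exists (k + 1)%N, (row_mx X e); split.
  by rewrite tr_row_mx mul_col_row X1 Xe eX ee -scalar_mx_block.
by rewrite tr_row_mx mul_row_col X2 /Pi' subrK.
Qed.

Lemma decomp_rank n k (X : 'M[R]_(n, k)) : X^T *m X = 1%:M -> \rank (X *m X^T) = k.
Proof.
move=> X1; apply/eqP; rewrite eqn_leq; apply/andP; split.
  exact: leq_trans (mxrankM_maxl _ _) (rank_leq_col _).
have h : \rank (1%:M : 'M[R]_k) = k by rewrite mxrank1.
have E : X^T *m (X *m X^T) *m X = 1%:M by rewrite mulmxA X1 mul1mx X1.
rewrite -[X in (X <= _)%N]h -E.
exact: leq_trans (mxrankM_maxl _ _) (mxrankM_maxr _ _).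
Qed.

Lemma proj_tr n (Q : 'M[R]_n) : Q^T = Q -> Q *m Q = Q -> \tr Q = (\rank Q)%:R.
Proof.
move=> hs hi; have [k [X [X1 X2]]] := decomp hs hi.
by rewrite -X2 decomp_rank // mxtrace_mulC X1 mxtrace1.
Qed.

Lemma frob2_tr n (M : 'M[R]_n) : frob2 M = \tr (M *m M^T).
Proof.
rewrite /frob2 /mxtrace; apply: eq_bigr => i _; rewrite mxE.
by apply: eq_bigr => j _; rewrite mxE expr2.
Qed.

Lemma trmxBZ n (a b : R) (A B : 'M[R]_n) : (a *: A - b *: B)^T = a *: A^T - b *: B^T.
Proof. by apply/matrixP => i j; rewrite !mxE. Qed.

Lemma Dw2E n (w : nat -> R) (Q1 Q2 : 'M[R]_n) : is_oproj Q1 -> is_oproj Q2 ->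
  Dw2 w Q1 Q2 = 2^-1 * (w (\rank Q1) ^+ 2 * (\rank Q1)%:R + w (\rank Q2) ^+ 2 * (\rank Q2)%:R)
     - w (\rank Q1) * w (\rank Q2) * \tr (Q1 *m Q2).
Proof.
move=> [s1 i1] [s2 i2]; rewrite /Dw2 frob2_tr trmxBZ s1 s2.
set a := w _; set b := w _.
rewrite mulmxBl !mulmxBr -!scalemxAl -!scalemxAr !scalerA i1 i2.
rewrite !raddfB /= !mxtraceZ (mxtrace_mulC Q2 Q1) (proj_tr s1 i1) (proj_tr s2 i2).
rewrite (mulrC b a); set t := \tr (Q1 *m Q2).
set r1 := (\rank Q1)%:R; set r2 := (\rank Q2)%:R.
by rewrite !expr2; field.
Qed.


Definition Cst p (w : nat -> R) m (Ps : 'I_m -> 'M[R]_p) :=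
  (m%:R)^-1 * \sum_(i < m) 2^-1 * (w (\rank (Ps i)) ^+ 2 * (\rank (Ps i))%:R).

Lemma trPbar p (w : nat -> R) m (Ps : 'I_m -> 'M[R]_p) Q :
  \tr (Pbar w Ps *m Q) = (m%:R)^-1 * \sum_(i < m) w (\rank (Ps i)) * \tr (Ps i *m Q).
Proof.
rewrite /Pbar -scalemxAl mxtraceZ mulmx_suml raddf_sum /=; congr (_ * _).
by apply: eq_bigr => i _; rewrite -scalemxAl mxtraceZ.
Qed.

Lemma sigma2E p (w : nat -> R) m (hm : (0 < m)%N) (Ps : 'I_m -> 'M[R]_p)
  (hPs : forall i, is_oproj (Ps i)) Q : is_oproj Q ->
  sigma2 w Ps Q = Cst w Ps - (w (\rank Q) * \tr (Pbar w Ps *m Q)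
                    - 2^-1 * w (\rank Q) ^+ 2 * (\rank Q)%:R).
Proof.
move=> hQ; rewrite /sigma2 trPbar /Cst.
set b := w (\rank Q); set r := (\rank Q)%:R.
have -> : \sum_(i < m) Dw2 w (Ps i) Q = \sum_(i < m)
   (2^-1 * (w (\rank (Ps i)) ^+ 2 * (\rank (Ps i))%:R) + 2^-1 * b ^+ 2 * r
     - b * (w (\rank (Ps i)) * \tr (Ps i *m Q))).
  by apply: eq_bigr => i _; rewrite Dw2E // -/b -/r; ring.
rewrite sumrB big_split /= sumr_const card_ord -mulr_sumr.
have m0 : (m%:R : R) != 0 by rewrite pnatr_eq0 -lt0n.
rewrite -(mulr_natr (2^-1 * b ^+ 2 * r) m) -[\sum_(i < m) b * _]mulr_sumr.
by field.
Qed.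


Lemma outer_sum p (v : 'M[R]_p) (c : 'I_p -> R) :
  \sum_(i < p) c i *: outer v i = v *m diag_mx (\row_i c i) *m v^T.
Proof.
apply/matrixP => a b; rewrite summxE !mxE; apply: eq_bigr => i _.
rewrite mul_mx_diag !mxE big_ord1 !mxE; ring.
Qed.

Lemma tr_diag p (d : 'rV[R]_p) (M : 'M[R]_p) :
  \tr (diag_mx d *m M) = \sum_(i < p) d 0 i * M i i.
Proof. by rewrite /mxtrace; apply: eq_bigr => i _; rewrite mul_diag_mx mxE. Qed.

Lemma sum_ind p r : (r <= p)%N -> \sum_(i < p) ((i < r)%N%:R : R) = r%:R.
Proof.
move=> hr; have -> : \sum_(i < p) ((i < r)%N%:R : R) = \sum_(i < p | (i < r)%N) 1.
  by rewrite [RHS]big_mkcond /=; apply: eq_bigr => i _; case: ifP.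
rewrite (big_ord_narrow hr).
by rewrite sumr_const card_ord.
Qed.

Lemma sum_lt p r (lam : 'I_p -> R) :
  \sum_(i < p | (i < r)%N) lam i = \sum_(i < p) lam i * (i < r)%N%:R.
Proof. by rewrite big_mkcond /=; apply: eq_bigr => i _; case: ifP; rewrite ?mulr1 ?mulr0. Qed.

Lemma kyfan_id p (lam q : 'I_p -> R) r (hr : (r <= p)%N) (c : R) :
  \sum_(i < p) q i = r%:R ->
  \sum_(i < p) lam i * q i - \sum_(i < p | (i < r)%N) lam i =
  \sum_(i < p) (lam i - c) * (q i - (i < r)%N%:R).
Proof.
move=> hq; rewrite sum_lt -sumrN -big_split /=.
have : \sum_(i < p) c * (q i - (i < r)%N%:R) = 0.
  by rewrite -mulr_sumr sumrB hq sum_ind // subrr mulr0.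
move=> h0; rewrite -[LHS]subr0 -{2}h0 -sumrB; apply: eq_bigr => i _; ring.
Qed.

Lemma kyfan_le p (lam q : 'I_p -> R) r (hr : (r <= p)%N)
  (hs : forall i j : 'I_p, (i <= j)%N -> lam j <= lam i)
  (hq0 : forall i, 0 <= q i) (hq1 : forall i, q i <= 1)
  (hsum : \sum_(i < p) q i = r%:R) :
  \sum_(i < p) lam i * q i <= \sum_(i < p | (i < r)%N) lam i.
Proof.
case: r hr hsum => [|r] hr hsum.
  have q0 : forall i, q i = 0.
    by move=> i; apply: (psumr_eq0P (P := predT)) => //; rewrite hsum.
  rewrite big1; last by move=> i _; rewrite q0 mulr0.
  by rewrite big1 // => i; rewrite ltn0.
rewrite -subr_le0 (@kyfan_id _ lam q _ hr (lam (Ordinal hr)) hsum).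
apply: sumr_le0 => i _; case: (ltnP i r.+1) => hi.
  apply: mulr_ge0_le0; last by rewrite subr_le0; apply: hq1.
  by rewrite subr_ge0; apply: hs; rewrite /= -ltnS.
apply: mulr_le0_ge0; last by rewrite /= mulr0n subr0.
by rewrite subr_le0; apply: hs; rewrite /= ltnW.
Qed.

Lemma kyfan_eq p (lam q : 'I_p -> R) r (hr : (r.+1 <= p)%N)
  (hs : forall i j : 'I_p, (i <= j)%N -> lam j <= lam i)
  (hq0 : forall i, 0 <= q i) (hq1 : forall i, q i <= 1)
  (hsum : \sum_(i < p) q i = r.+1%:R) :
  \sum_(i < p) lam i * q i = \sum_(i < p | (i < r.+1)%N) lam i ->
  forall i, (lam (Ordinal hr) < lam i -> q i = 1) /\ (lam i < lam (Ordinal hr) -> q i = 0).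
Proof.
move=> heq; set c := lam (Ordinal hr).
have ht : forall i, (lam i - c) * (q i - (i < r.+1)%N%:R) <= 0.
  move=> i; case: (ltnP i r.+1) => hi.
    apply: mulr_ge0_le0; last by rewrite subr_le0; apply: hq1.
    by rewrite subr_ge0; apply: hs; rewrite /= -ltnS.
  apply: mulr_le0_ge0; last by rewrite /= mulr0n subr0.
  by rewrite subr_le0; apply: hs; rewrite /= ltnW.
have hz : forall i, (lam i - c) * (q i - (i < r.+1)%N%:R) = 0.
  move=> i; apply/eqP; rewrite -oppr_eq0; apply/eqP.
  apply: (psumr_eq0P (P := predT) (F := fun i => - ((lam i - c) * (q i - (i < r.+1)%N%:R)))) => //.
    by move=> j _; rewrite oppr_ge0.
  by rewrite sumrN -(@kyfan_id _ lam q _ hr c hsum) heq subrr oppr0.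
move=> i; split => hl.
  have hi : (i < r.+1)%N.
    rewrite ltnNge; apply/negP => hi.
    by move: (hs (Ordinal hr) i (ltnW hi)); rewrite leNgt hl.
  have := hz i; rewrite hi => /eqP; rewrite mulf_eq0 !subr_eq0 => /orP [/eqP h|/eqP //].
  by move: hl; rewrite h ltxx.
have hi : (r.+1 <= i)%N.
  rewrite leqNgt; apply/negP => hi.
  by move: (hs i (Ordinal hr) hi); rewrite leNgt hl.
have := hz i; rewrite ltnNge hi /= => /eqP; rewrite mulf_eq0 subr_eq0 => /orP [/eqP h|].
  by move: hl; rewrite h ltxx.
by rewrite mulr0n subr0 => /eqP.
Qed.

End Helpers.

Set Implicit Arguments. Unset Strict Implicit. Unset Printing Implicit Defensive.

Section Helpers2.
Variable R : realType.

Lemma initseg p (P : pred 'I_p) :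
  (forall i j : 'I_p, P j -> (i <= j)%N -> P i) ->
  forall j : 'I_p, P j = (j < \max_(i | P i) i.+1)%N.
Proof.
move=> hd j; apply/idP/idP => [hj|].
  by have := @leq_bigmax_cond _ P (fun i : 'I_p => (i : nat).+1) j hj.
apply: contraTT => hj; rewrite -leqNgt; apply/bigmax_leqP => i hi.
rewrite ltnNge; apply/negP => hji; move: hj; rewrite (hd _ _ hi hji) //.
Qed.

Lemma bigmaxS_le p (P : pred 'I_p) : (\max_(i | P i) i.+1 <= p)%N.
Proof. by apply/bigmax_leqP => i _; exact: ltn_ord. Qed.

Lemma diag_sq n (M : 'M[R]_n) (hs : M^T = M) (hi : M *m M = M) i :
  M i i = \sum_j M i j ^+ 2.
Proof.
rewrite -{1}hi mxE; apply: eq_bigr => j _.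
by rewrite -{2}hs mxE expr2.
Qed.

Lemma diag_bounds n (M : 'M[R]_n) (hs : M^T = M) (hi : M *m M = M) i :
  0 <= M i i /\ M i i <= 1.
Proof.
have h0 : 0 <= M i i by rewrite diag_sq // sumr_ge0 // => j _; exact: sqr_ge0.
split => //.
have h1 : M i i ^+ 2 <= M i i.
  rewrite [X in _ <= X]diag_sq // (bigD1 i) //= lerDl.
  by apply: sumr_ge0 => j _; exact: sqr_ge0.
rewrite expr2 in h1; nra.
Qed.

Lemma row_one n (M : 'M[R]_n) (hs : M^T = M) (hi : M *m M = M) i :
  M i i = 1 -> forall j, M i j = (i == j)%:R.
Proof.
move=> h1 j; have := diag_sq hs hi i; rewrite h1 (bigD1 i) //= h1 expr1n.
move=> h; have hz : \sum_(j < n | j != i) M i j ^+ 2 = 0.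
  by apply: (addrI 1); rewrite addr0 -h.
case: eqP => [<-|/eqP hij] //.
have := psumr_eq0P (P := fun j => j != i) (F := fun j => M i j ^+ 2).
move=> /(_ (fun j _ => sqr_ge0 _) hz j); rewrite eq_sym hij.
by move=> /(_ isT) /eqP; rewrite sqrf_eq0 => /eqP.
Qed.

Lemma row_zero n (M : 'M[R]_n) (hs : M^T = M) (hi : M *m M = M) i :
  M i i = 0 -> forall j, M i j = 0.
Proof.
move=> h0 j; have := diag_sq hs hi i; rewrite h0 => hz.
have := psumr_eq0P (P := predT) (F := fun j => M i j ^+ 2).
move=> /(_ (fun j _ => sqr_ge0 _) (esym hz) j isT) /eqP.
by rewrite sqrf_eq0 => /eqP.
Qed.

Lemma symE n (M : 'M[R]_n) : M^T = M -> forall i j, M j i = M i j.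
Proof. by move=> hs i j; rewrite -{1}hs mxE. Qed.

Lemma pidE p k : (pid_mx k : 'M[R]_p) = diag_mx (\row_i (i < k)%N%:R).
Proof.
apply/matrixP => i j; rewrite !mxE.
rewrite val_eqE; case: (i == j) => /=; by rewrite ?mulr1n ?mulr0n.
Qed.

Lemma sum_delta p (j : 'I_p) (f : 'I_p -> R) :
  \sum_(i < p) ((i : nat) == j)%:R * f i = f j.
Proof.
rewrite (bigD1 j) //= eqxx mul1r big1 ?addr0 // => i hi.
by rewrite val_eqE (negbTE hi) mul0r.
Qed.

Lemma tr_XXt n k (X : 'M[R]_(n, k)) : X^T *m X = 1%:M -> \tr (X *m X^T) = k%:R.
Proof. by move=> h; rewrite mxtrace_mulC h mxtrace1. Qed.

End Helpers2.

Unset Implicit Arguments.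

Theorem proposition2p2 (R : realType) (p : nat) (hp : (0 < p)%N)
  (w : nat -> R) (hw : forall k : nat, (k <= p)%N -> 0 < w k)
  (m : nat) (hm : (0 < m)%N) (Ps : 'I_m -> 'M[R]_p)
  (hPs : forall i : 'I_m, is_oproj (Ps i))
  (u : 'M[R]_p) (lam : 'I_p -> R)
  (hu : u^T *m u = 1%:M)
  (hlam_sorted : forall i j : 'I_p, (i <= j)%N -> lam j <= lam i)
  (hlam_nonneg : forall i : 'I_p, 0 <= lam i)
  (hdecomp : Pbar w Ps = \sum_(i < p) lam i *: outer u i)
  (P : 'M[R]_p) (hP : is_AOP w Ps P) :
  (forall k : nat, (k <= p)%N -> fw w lam k <= fw w lam (\rank P))
  /\ exists v : 'M[R]_p,
       [/\ v^T *m v = 1%:M,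
           Pbar w Ps = \sum_(i < p) lam i *: outer v i
         & P = (0 < \rank P)%N%:R *: \sum_(i < p | (i < \rank P)%N) outer v i].
Proof.
set A := Pbar w Ps.
have uu : u *m u^T = 1%:M := mulmx1C hu.
set D := diag_mx (\row_i lam i).
have hA : A = u *m D *m u^T by rewrite /A hdecomp outer_sum.
pose Q0 (Q : 'M[R]_p) := u^T *m Q *m u.
have trA : forall Q, \tr (A *m Q) = \sum_i lam i * Q0 Q i i.
  move=> Q; rewrite hA -!mulmxA mxtrace_mulC -!mulmxA tr_diag /Q0.
  by apply: eq_bigr => i _; rewrite mxE mulmxA.
have Q0s : forall Q, is_oproj Q -> (Q0 Q)^T = Q0 Q.
  by move=> Q [hs hi]; rewrite /Q0 !trmx_mul trmxK hs mulmxA.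
have Q0i : forall Q, is_oproj Q -> Q0 Q *m Q0 Q = Q0 Q.
  move=> Q [hs hi]; rewrite /Q0 !mulmxA -(mulmxA _ u) uu mulmx1.
  by rewrite -(mulmxA u^T) hi.
have Q0tr : forall Q, is_oproj Q -> \tr (Q0 Q) = (\rank Q)%:R.
  move=> Q [hs hi]; rewrite /Q0 mxtrace_mulC mulmxA uu mul1mx.
  exact: proj_tr.
pose h (Q : 'M[R]_p) := w (\rank Q) * \tr (A *m Q) - 2^-1 * w (\rank Q) ^+ 2 * (\rank Q)%:R.
have hmax : forall Q, is_oproj Q -> h Q <= h P.
  move=> Q hQ; have := proj2 hP Q hQ.
  by rewrite !sigma2E //; [rewrite lerD2l lerN2 | exact: proj1 hP].
have fwE : forall k, fw w lam k = w k * \sum_(i < p | (i < k)%N) lam i - 2^-1 * w k ^+ 2 * k%:R.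
  move=> [|k]; rewrite /fw /=; last by rewrite mulr1.
  by rewrite mulr0 big1 ?mulr0 // => i; rewrite ltn0.
have rle : forall Q : 'M[R]_p, (\rank Q <= p)%N by move=> Q; exact: rank_leq_row.
have upper : forall Q, is_oproj Q -> \tr (A *m Q) <= \sum_(i < p | (i < \rank Q)%N) lam i.
  move=> Q hQ; rewrite trA; apply: kyfan_le => //.
  - by move=> i; case: (diag_bounds (Q0s Q hQ) (Q0i Q hQ) i).
  - by move=> i; case: (diag_bounds (Q0s Q hQ) (Q0i Q hQ) i).
  - by rewrite -Q0tr.
have hupper : forall Q, is_oproj Q -> h Q <= fw w lam (\rank Q).
  move=> Q hQ; rewrite fwE /h lerD2r ler_pM2l ?hw //; exact: upper.
pose Qk (k : nat) := u *m pid_mx k *m u^T.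
have Qkp : forall k, (k <= p)%N -> is_oproj (Qk k).
  move=> k hk; split; first by rewrite /Qk !trmx_mul trmxK tr_pid_mx mulmxA.
  rewrite /Qk !mulmxA -(mulmxA _ u^T) hu mulmx1 -(mulmxA u) pid_mx_id //.
have Qkr : forall k, (k <= p)%N -> \rank (Qk k) = k.
  move=> k hk; have [hs hi] := Qkp k hk; apply/eqP; rewrite -(eqr_nat R) -proj_tr //.
  rewrite /Qk mxtrace_mulC mulmxA hu mul1mx proj_tr ?tr_pid_mx ?pid_mx_id //.
  by rewrite rank_pid_mx.
have Qktr : forall k, (k <= p)%N -> \tr (A *m Qk k) = \sum_(i < p | (i < k)%N) lam i.
  move=> k hk; rewrite trA sum_lt; apply: eq_bigr => i _.
  rewrite /Q0 /Qk !mulmxA hu mul1mx -(mulmxA _ u^T) hu mulmx1.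
  by rewrite pidE mxE !mxE eqxx mulr1n.
have hQk : forall k, (k <= p)%N -> h (Qk k) = fw w lam k.
  by move=> k hk; rewrite /h fwE Qkr // Qktr.
have part1 : forall k : nat, (k <= p)%N -> fw w lam k <= fw w lam (\rank P).
  move=> k hk; rewrite -hQk //; apply: le_trans (hmax _ (Qkp k hk)) _.
  exact: hupper (proj1 hP).
split => //.
have [Ps_ Pi_] := proj1 hP.
move Er: (\rank P) => r; case: r Er => [|r] Er.
  exists u; split => //; rewrite /= scale0r; apply/eqP; rewrite -mxrank_eq0 Er //.
have hr : (r.+1 <= p)%N by rewrite -Er rle.
have heq : \tr (A *m P) = \sum_(i < p | (i < r.+1)%N) lam i.
  apply/eqP; rewrite eq_le; apply/andP; split; first by rewrite -Er; exact: upper.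
  have := hmax _ (Qkp _ hr); rewrite hQk // /h fwE Er lerD2r ler_pM2l ?hw //.
set M := Q0 P.
have Ms : M^T = M := Q0s P (proj1 hP).
have Mi : M *m M = M := Q0i P (proj1 hP).
have Mtr : \tr M = r.+1%:R by rewrite /M Q0tr // Er.
have hk := @kyfan_eq R p lam (fun i => M i i) r hr hlam_sorted
   (fun i => proj1 (diag_bounds Ms Mi i)) (fun i => proj2 (diag_bounds Ms Mi i)) Mtr.
have {}hk := hk (etrans (esym (trA P)) heq).
set c := lam (Ordinal hr) in hk.
set a := (\max_(i : 'I_p | (c < lam i)%R) (i : nat).+1)%N.
set b := (\max_(i : 'I_p | (c <= lam i)%R) (i : nat).+1)%N.
have ha : forall j : 'I_p, (c < lam j) = (j < a)%N.
  apply: initseg => i j hj hij; exact: lt_le_trans hj (hlam_sorted _ _ hij).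
have hb : forall j : 'I_p, (c <= lam j) = (j < b)%N.
  apply: initseg => i j hj hij; exact: le_trans hj (hlam_sorted _ _ hij).
have haP : (a <= p)%N := bigmaxS_le _.
have hbP : (b <= p)%N := bigmaxS_le _.
have har : (a <= r)%N by rewrite leqNgt -(ha (Ordinal hr)) ltxx.
have hrb : (r < b)%N by rewrite -(hb (Ordinal hr)) lexx.
have hab : (a <= b)%N by apply: leq_trans har (ltnW hrb).
have R1 : forall i j : 'I_p, (i < a)%N -> M i j = (i == j)%:R.
  by move=> i j hi; apply: row_one => //; apply: (proj1 (hk i)); rewrite ha.
have R3 : forall i j : 'I_p, (b <= i)%N -> M i j = 0.
  move=> i j hi; apply: row_zero => //; apply: (proj2 (hk i)).
  by rewrite ltNge hb -leqNgt.
have hMdef : M = u^T *m P *m u by [].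
clearbody M.
have pidij : forall k (i j : 'I_p), (pid_mx k : 'M[R]_p) i j = ((i == j) && (i < k)%N)%:R.
  by move=> k i j; rewrite mxE val_eqE.
set Ea : 'M[R]_p := pid_mx a.
set Eb : 'M[R]_p := pid_mx b.
have EaM : Ea *m M = Ea.
  apply/matrixP => i j; rewrite /Ea pidE mul_diag_mx -pidE pidij !mxE.
  case: (ltnP i a) => hi; first by rewrite mul1r R1 // andbT.
  by rewrite mul0r andbF.
have MEa : M *m Ea = Ea.
  by apply: trmx_inj; rewrite trmx_mul Ms /Ea tr_pid_mx -/Ea EaM.
have EbM : Eb *m M = M.
  apply/matrixP => i j; rewrite /Eb pidE mul_diag_mx !mxE.
  case: (ltnP i b) => hi; first by rewrite mul1r.
  by rewrite mul0r R3.
have MEb : M *m Eb = M.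
  by apply: trmx_inj; rewrite trmx_mul Ms /Eb tr_pid_mx -/Eb EbM.
have EaEb : Ea *m Eb = Ea by rewrite /Ea /Eb mul_pid_mx (minn_idPl hab) (minn_idPr haP).
have EbEa : Eb *m Ea = Ea by rewrite /Ea /Eb mul_pid_mx (minn_idPr hab) (minn_idPr haP).
have EaEa : Ea *m Ea = Ea by rewrite /Ea pid_mx_id.
have EbEb : Eb *m Eb = Eb by rewrite /Eb pid_mx_id.
set Qt := M - Ea.
set Z := Eb - M.
have Qts : Qt^T = Qt by rewrite /Qt linearB /= Ms /Ea tr_pid_mx.
have Zs : Z^T = Z by rewrite /Z linearB /= Ms /Eb tr_pid_mx.
have Qti : Qt *m Qt = Qt.
  by rewrite /Qt mulmxBl !mulmxBr Mi MEa EaM EaEa subrr subr0.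
have Zi : Z *m Z = Z.
  by rewrite /Z mulmxBl !mulmxBr Mi MEb EbM EbEb subrr subr0.
have QtZ : Qt *m Z = 0.
  by rewrite /Qt /Z mulmxBl !mulmxBr Mi MEb EaEb EaM !subrr.
have trEa : \tr Ea = a%:R by rewrite /Ea proj_tr ?tr_pid_mx ?pid_mx_id ?rank_pid_mx.
have trEb : \tr Eb = b%:R by rewrite /Eb proj_tr ?tr_pid_mx ?pid_mx_id ?rank_pid_mx.
have [k2 [X2 [X21 X22]]] := decomp Qts Qti.
have [k3 [X3 [X31 X32]]] := decomp Zs Zi.
have hk2 : (a + k2 = r.+1)%N.
  apply/eqP; rewrite -(eqr_nat R) natrD -(tr_XXt X21) X22 /Qt raddfB /= Mtr trEa.
  by rewrite addrC subrK.
have hk3 : (r.+1 + k3 = b)%N.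
  apply/eqP; rewrite -(eqr_nat R) natrD -(tr_XXt X31) X32 /Z raddfB /= Mtr trEb.
  by rewrite addrC subrK.
have QtX2 : Qt *m X2 = X2 by rewrite -X22 -mulmxA X21 mulmx1.
have ZX3 : Z *m X3 = X3 by rewrite -X32 -mulmxA X31 mulmx1.
have X2tQt : X2^T *m Qt = X2^T by rewrite -{1}Qts -trmx_mul QtX2.
have X23 : X2^T *m X3 = 0 by rewrite -X2tQt -ZX3 mulmxA -(mulmxA _ Qt) QtZ mulmx0 mul0mx.
have MX2 : M *m X2 = X2.
  have EaQt : Ea *m Qt = 0 by rewrite /Qt mulmxBr EaM EaEa subrr.
  have -> : M = Qt + Ea by rewrite /Qt subrK.
  by rewrite mulmxDl QtX2 -{2}QtX2 mulmxA EaQt mul0mx addr0.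
have MX3 : M *m X3 = 0.
  have MZ : M *m Z = 0 by rewrite /Z mulmxBr MEb Mi subrr.
  by rewrite -ZX3 mulmxA MZ mul0mx.
have rowz : forall k (N : 'M[R]_p) (Y : 'M[R]_(p, k)) (i : 'I_p) l,
    N *m Y = Y -> (forall j, N i j = 0) -> Y i l = 0.
  move=> k N Y i l hNY hN; rewrite -hNY mxE big1 // => j _; by rewrite hN mul0r.
have subE : forall (X Y : 'M[R]_p) i j, (X - Y) i j = X i j - Y i j.
  by move=> X Y i j; rewrite !mxE.
have out : forall i : 'I_p, ((i < a) || (b <= i))%N -> forall j, Qt i j = 0 /\ Z i j = 0.
  move=> i /orP [hi|hi] j; rewrite /Qt /Z /Ea /Eb !subE !pidij.
    by rewrite R1 // hi (leq_trans hi hab) !andbT subrr.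
  by rewrite R3 // !ltnNge hi (leq_trans hab hi) !andbF subrr.
have sX2 : forall (i : 'I_p) l, ((i < a) || (b <= i))%N -> X2 i l = 0.
  by move=> i l hi; apply: (rowz _ Qt) => // j; case: (out i hi j).
have sX3 : forall (i : 'I_p) l, ((i < a) || (b <= i))%N -> X3 i l = 0.
  by move=> i l hi; apply: (rowz _ Z) => // j; case: (out i hi j).
pose xf := fun k (X : 'M[R]_(p, k)) (l : nat) (i : 'I_p) =>
  oapp (fun l' : 'I_k => X i l') 0 (insub l).
have xfE : forall k (X : 'M[R]_(p, k)) l (hl : (l < k)%N) i, xf k X l i = X i (Ordinal hl).
  by move=> k X l hl i; rewrite /xf insubT.
have xf0 : forall k (X : 'M[R]_(p, k)) l i, (forall l', X i l' = 0) -> xf k X l i = 0.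
  by move=> k X l i hx; rewrite /xf; case: insub => //= l'.
pose g := fun (j : nat) (i : 'I_p) => if ((j < a) || (b <= j))%N then ((i : nat) == j)%:R
  else if (j < r.+1)%N then xf k2 X2 (j - a)%N i else xf k3 X3 (j - r.+1)%N i.
have gU : forall j i, ((j < a) || (b <= j))%N -> g j i = ((i : nat) == j)%:R.
  by move=> j i hx; rewrite /g hx.
have gS : forall j (i : 'I_p), ((i < a) || (b <= i))%N -> ~~ ((j < a) || (b <= j))%N -> g j i = 0.
  move=> j i hi hj; rewrite /g (negbTE hj); case: ifP => _; apply: xf0 => l.
    exact: sX2.
  exact: sX3.
have g2 : forall (j : nat) i (hh : (j - a < k2)%N), ~~ ((j < a) || (b <= j))%N ->
    (j < r.+1)%N -> g j i = X2 i (Ordinal hh).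
  by move=> j i hh hj hjr; rewrite /g (negbTE hj) hjr xfE.
have g3 : forall (j : nat) i (hh : (j - r.+1 < k3)%N), ~~ ((j < a) || (b <= j))%N ->
    (r.+1 <= j)%N -> g j i = X3 i (Ordinal hh).
  by move=> j i hh hj hjr; rewrite /g (negbTE hj) ltnNge hjr /= (xfE _ _ _ hh).
have tie : forall j : 'I_p, ~~ ((j < a) || (b <= j))%N -> (a <= j)%N /\ (j < b)%N.
  by move=> j; rewrite negb_or -leqNgt -ltnNge => /andP [].
have entry : forall k k' (X : 'M[R]_(p, k)) (Y : 'M[R]_(p, k')) (l : 'I_k) (l' : 'I_k'),
    \sum_(i < p) X i l * Y i l' = (X^T *m Y) l l'.
  by move=> k k' X Y l l'; rewrite mxE; apply: eq_bigr => i _; rewrite mxE.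
have O : forall j j' : 'I_p, \sum_(i < p) g j i * g j' i = (j == j')%:R.
  move=> j j'.
  case: (boolP ((j < a) || (b <= j))%N) => hj;
    case: (boolP ((j' < a) || (b <= j'))%N) => hj'.
  - under eq_bigr => i _ do rewrite (gU j) // (gU j') //.
    by rewrite sum_delta val_eqE.
  - have ne : (j == j') = false by apply/eqP => ej; move: hj'; rewrite -ej hj.
    under eq_bigr => i _ do rewrite (gU j) //.
    by rewrite sum_delta gS // ne.
  - have ne : (j == j') = false by apply/eqP => ej; move: hj'; rewrite -ej (negbTE hj).
    under eq_bigr => i _ do rewrite (gU j') // mulrC.
    by rewrite sum_delta gS // ne.
  have [haj hjb] := tie j hj; have [haj' hjb'] := tie j' hj'.
  case: (ltnP j r.+1) => hjr; case: (ltnP j' r.+1) => hj'r.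
  - have h1 : (j - a < k2)%N by lia.
    have h1' : (j' - a < k2)%N by lia.
    under eq_bigr => i _ do rewrite (g2 j i h1) // (g2 j' i h1') //.
    rewrite entry X21 mxE -val_eqE /= eqn_sub2rE //.
  - have ne : (j == j') = false by apply/eqP => ej; move: hjr; rewrite ej ltnNge hj'r.
    have h1 : (j - a < k2)%N by lia.
    have h1' : (j' - r.+1 < k3)%N by lia.
    under eq_bigr => i _ do rewrite (g2 j i h1) // (g3 j' i h1') //.
    by rewrite entry X23 mxE ne.
  - have ne : (j == j') = false by apply/eqP => ej; move: hj'r; rewrite -ej ltnNge hjr.
    have h1 : (j - r.+1 < k3)%N by lia.
    have h1' : (j' - a < k2)%N by lia.
    under eq_bigr => i _ do rewrite (g3 j i h1) // (g2 j' i h1') // mulrC.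
    by rewrite entry X23 mxE ne.
  - have h1 : (j - r.+1 < k3)%N by lia.
    have h1' : (j' - r.+1 < k3)%N by lia.
    under eq_bigr => i _ do rewrite (g3 j i h1) // (g3 j' i h1') //.
    by rewrite entry X31 mxE -val_eqE /= eqn_sub2rE.
have E : forall j i : 'I_p, lam i * g j i = lam j * g j i.
  move=> j i; case: (boolP ((j < a) || (b <= j))%N) => hj.
    rewrite gU //; case: (eqVneq i j) => [-> //|ne].
    by rewrite val_eqE (negbTE ne) !mulr0.
  case: (boolP ((i < a) || (b <= i))%N) => hi; first by rewrite gS // !mulr0.
  have lc : forall k : 'I_p, ~~ ((k < a) || (b <= k))%N -> lam k = c.
    move=> k hk0; have [h1 h2] := tie k hk0; apply/eqP; rewrite eq_le; apply/andP; split.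
      by rewrite leNgt ha -leqNgt.
    by rewrite hb.
  by rewrite !lc.
have Qa : forall i j : 'I_p, \sum_(l < p) M i l * g j l = (j < r.+1)%N%:R * g j i.
  move=> i j; case: (boolP ((j < a) || (b <= j))%N) => hj.
    under eq_bigr => l _ do rewrite (gU j) // mulrC.
    rewrite sum_delta gU //; case/orP: hj => hj.
      rewrite -(symE Ms i j) R1 // (leq_trans hj (leq_trans har (leqnSn r))) mul1r.
      by rewrite val_eqE eq_sym.
    by rewrite -(symE Ms i j) R3 // ltnNge (leq_trans hrb hj) mul0r.
  have [haj hjb] := tie j hj.
  case: (ltnP j r.+1) => hjr.
    have h1 : (j - a < k2)%N by lia.
    under eq_bigr => l _ do rewrite (g2 j l h1) //.
    have := congr1 (fun N : 'M[R]_(p, k2) => N i (Ordinal h1)) MX2; rewrite mxE /= => ->.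
    by rewrite mul1r (g2 j i h1).
  have h1 : (j - r.+1 < k3)%N by lia.
  under eq_bigr => l _ do rewrite (g3 j l h1) //.
  have := congr1 (fun N : 'M[R]_(p, k3) => N i (Ordinal h1)) MX3; rewrite mxE /= => ->.
  by rewrite mxE mul0r.
pose W : 'M[R]_p := \matrix_(i, j) g j i.
have WW : W^T *m W = 1%:M.
  apply/matrixP => j j'; rewrite !mxE -O; apply: eq_bigr => i _; rewrite !mxE.
  by [].
have WWt : W *m W^T = 1%:M := mulmx1C WW.
have DW : D *m W = W *m D.
  apply/matrixP => i j; rewrite /D mul_diag_mx mul_mx_diag !mxE E mulrC.
  by [].
have MW : M *m W = W *m pid_mx r.+1.
  apply/matrixP => i j; rewrite pidE mul_mx_diag !mxE -[RHS]mulrC -Qa.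
  by apply: eq_bigr => l _; rewrite mxE.
exists (u *m W); split.
- by rewrite trmx_mul mulmxA -(mulmxA _ u^T) hu mulmx1 WW.
- rewrite hA outer_sum -/D trmx_mul !mulmxA -(mulmxA u W) -DW.
  by rewrite mulmxA -(mulmxA _ W) WWt mulmx1.
- rewrite /= scale1r.
  have -> : \sum_(i < p | (i < r.+1)%N) outer (u *m W) i =
            \sum_(i < p) (i < r.+1)%N%:R *: outer (u *m W) i.
    rewrite big_mkcond /=; apply: eq_bigr => i _.
    by case: ifP => _; rewrite ?scale1r ?scale0r.
  rewrite outer_sum -pidE trmx_mul !mulmxA -(mulmxA u W) -MW mulmxA.
  rewrite -(mulmxA _ W) WWt mulmx1 hMdef !mulmxA uu mul1mx -mulmxA uu mulmx1.
  by [].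
Qed.
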